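(* Let $T$ be a tree, $D\subseteq V(T)$, and let $\mathcal X_T$ be the hypergraph associated with $T$. Then $(T,D)$ is MBD Dominator-critical if and only if $\mathcal X_T$ has at least one edge and $D$ is a minimal transversal of $\mathcal X_T$.
   Context: For a tree $T'$, $S(T')$ is obtained by subdividing each edge of $T'$ exactly once; $\mathcal S=\{S(T'):T'\text{ a tree}\}$ and $X(S(T'))=V(T')$ (with $S(P_1)=P_1$, $X(P_1)=V(P_1)$). $F\in\mathcal S$ is a substructure in $T$ if $F$ is a subgraph of $T$ and $\deg_T(v)=\deg_F(v)$ for all $v\in X(F)$. The hypergraph $\mathcal X_T$ has vertex set $V(T)$ and edge set $\{X(F): F\in\mathcal S \text{ is a substructure in } T\}$. A transversal of a hypergraph is a vertex set meeting every edge; it is minimal if no proper subset is a transversal. In the MBD game on a predominated graph $(G,D)$, $D\subseteq V(G)$, Staller and Dominator alternately claim unclaimed vertices of $V(G)$, Staller first; Staller wins if she claims all of $N_G[v]$ for some $v\in V(G)\setminus D$, Dominator wins otherwise. $(G,D)$ is MBD Dominator-critical if $D\neq\emptyset$, Dominator wins on $(G,D)$, and Staller wins on $(G,D\setminus\{v\})$ for every $v\in D$. *)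

(* Defs.v *)
From mathcomp Require Import all_boot.
Set Implicit Arguments. Unset Strict Implicit. Unset Printing Implicit Defensive.

Section Defs.
Variable V : finType.

Definition tree_on (X : {set V}) (t : rel V) : Prop :=
  [/\ forall x y, t x y -> (x \in X) && (y \in X),
      symmetric t /\ irreflexive t,
      X != set0,
      forall x y, x \in X -> y \in X -> connect t x y &
      ~ exists s : seq V, [/\ uniq s, 2 < size s & cycle t s]].

Definition is_tree (e : rel V) : Prop := tree_on setT e.

Definition subgraph (e : rel V) (VF : {set V}) (f : rel V) : Prop :=
  symmetric f /\
  forall x y, f x y -> [&& e x y, x \in VF & y \in VF].

(* (VF, f) is isomorphic to S(T') for a tree T' whose vertex set is
   identified with X, i.e. F \in S and X(F) = X. *)
Definition subdivided_tree (VF : {set V}) (f : rel V) (X : {set V}) : Prop :=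
  exists t : rel V,
  [/\ tree_on X t,
      X \subset VF,
      (forall x y, f x y -> ((x \in X) && (y \in VF :\: X)) ||
                            ((y \in X) && (x \in VF :\: X))),
      (forall y, y \in VF :\: X ->
         exists x1 x2, [/\ x1 != x2, t x1 x2 &
           forall z, f y z = (z == x1) || (z == x2)]) &
      (forall x1 x2, t x1 x2 ->
         exists! y, [/\ y \in VF :\: X, f x1 y & f x2 y])].

Definition degree (f : rel V) (v : V) : nat := #|[set u | f v u]|.

(* X is an edge of the hypergraph X_T: X = X(F) for a substructure F of T *)
Definition hyperedge (e : rel V) (X : {set V}) : Prop :=
  exists (VF : {set V}) (f : rel V),
  [/\ subgraph e VF f, subdivided_tree VF f X &
      forall v, v \in X -> degree e v = degree f v].

Definition transversal (e : rel V) (D : {set V}) : Prop :=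
  forall X, hyperedge e X -> X :&: D != set0.

Definition minimal_transversal (e : rel V) (D : {set V}) : Prop :=
  transversal e D /\ forall D' : {set V}, D' \proper D -> ~ transversal e D'.

Definition cnbhd (e : rel V) (v : V) : {set V} := [set u | (u == v) || e v u].

(* S = vertices claimed by Staller, C = all claimed
   vertices, st = true iff it is Staller's turn.  The fuel n bounds
   the number of remaining moves. *)
Fixpoint staller_wins_from (e : rel V) (D : {set V}) (n : nat)
    (S C : {set V}) (st : bool) : bool :=
  if [exists v in ~: D, cnbhd e v \subset S] then true
  else match n with
  | 0 => false
  | n'.+1 =>
      if ~: C == set0 then false
      else if st then
        [exists u in ~: C, staller_wins_from e D n' (u |: S) (u |: C) false]
      else
        [forall u in ~: C, staller_wins_from e D n' S (u |: C) true]
  end.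

Definition staller_wins (e : rel V) (D : {set V}) : bool :=
  staller_wins_from e D #|V| set0 set0 true.

Definition dominator_wins (e : rel V) (D : {set V}) : bool :=
  ~~ staller_wins e D.

Definition dominator_critical (e : rel V) (D : {set V}) : Prop :=
  [/\ D != set0, dominator_wins e D &
      forall v, v \in D -> staller_wins e (D :\ v)].

End Defs.

(* Main.v *)
Require Import Defs.
From mathcomp Require Import all_boot.
From Stdlib Require Import Classical.
From mathcomp Require Import zify.
Set Implicit Arguments. Unset Strict Implicit. Unset Printing Implicit Defensive.


Section Paths.
Variable V : finType.

Definition acyc (r : rel V) := ~ exists s : seq V, [/\ uniq s, 2 < size s & cycle r s].

Lemma chord (r : rel V) a p1 w p2 :
  uniq (a :: p1 ++ w :: p2) -> path r a (p1 ++ w :: p2) -> r w a -> 0 < size p1 ->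
  ~ acyc r.
Proof.
move=> U P rwa sp1 Hac; apply: Hac; exists (a :: rcons p1 w); split.
- apply: subseq_uniq U; rewrite -cats1 -cat_cons /=. rewrite eqxx.
  by apply: cat_subseq; [exact: subseq_refl | rewrite /= eqxx sub0seq].
- by rewrite /= size_rcons; case: p1 sp1 {U P}.
- rewrite /= rcons_path last_rcons rwa andbT.
  by rewrite rcons_path; move: P; rewrite cat_path /= => /andP [-> /andP [->]].
Qed.

Lemma exists_max (Q : seq V -> Prop) K :
  (exists s, Q s) -> (forall s, Q s -> size s <= K) ->
  exists s, Q s /\ forall s', Q s' -> size s' <= size s.
Proof.
move=> [s0 Qs0] HK.
suff H : forall N s0, Q s0 -> K - size s0 < N ->
   exists s, Q s /\ forall s', Q s' -> size s' <= size s.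
  by apply: (H (K - size s0).+1 s0).
elim=> [//|N IH] {}s0 {}Qs0 HN.
case: (classic (exists s', Q s' /\ size s0 < size s')).
- move=> [s' [Qs' lt]]; apply: (IH s' Qs').
  have := HK _ Qs'; have := HK _ Qs0. move: HN lt. clear. lia.
- move=> H; exists s0; split => // s' Qs'; rewrite leqNgt; apply/negP => lt; apply: H; by exists s'.
Qed.
End Paths.

Section LP.
Variable V : finType.
Definition rpath (r : rel V) (s : seq V) := if s is x :: s' then path r x s' else true.

Lemma uniq_size_card (s : seq V) : uniq s -> size s <= #|V|.
Proof. by move=> /card_uniqP <-; exact: max_card. Qed.

Lemma longest (r : rel V) a b : symmetric r -> irreflexive r -> acyc r -> r a b ->
 exists v0 v1 v2, [/\ r v0 v1, forall w, r v0 w -> w = v1 &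
   forall w, r v1 w -> w <> v0 -> w <> v2 -> forall z, r w z -> z = v1].
Proof.
move=> rs ri ra rab.
have [s [[Us Ps] Ms]] : exists s, (uniq s /\ rpath r s) /\
    forall s', (uniq s' /\ rpath r s') -> size s' <= size s.
  apply: (@exists_max _ _ #|V|).
  - exists [:: a; b]; split; rewrite /= ?rab ?andbT ?inE //.
    by apply/eqP => ab; move: rab; rewrite ab ri.
  - by move=> s' [Us' _]; exact: uniq_size_card.
have : 2 <= size s.
  have := Ms [:: a; b]; apply; split; rewrite /= ?rab ?andbT ?inE //.
  by apply/eqP => ab; move: rab; rewrite ab ri.
case: s Us Ps Ms => [|v0 [|v1 rest]] //= Us Ps Ms _.
move: Ps => /andP [r01 Prest].
have F1 : forall w, r v0 w -> w = v1.
  move=> w r0w; case: (boolP (w \in v0 :: v1 :: rest)) => [|wn].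
  - rewrite !inE => /or3P [/eqP wv0|/eqP -> //|wr].
    + by move: r0w; rewrite wv0 ri.
    + case/splitPr: wr Us Prest => r1 r2 Us Prest.
      exfalso; apply: (@chord _ r v0 (v1 :: r1) w r2) => //=.
      by rewrite r01.
      by rewrite rs.
  - suff : (size rest).+3 <= (size rest).+2 by rewrite ltnn.
    apply: (Ms (w :: v0 :: v1 :: rest)).
    split; first by move: wn Us => /= -> ->.
    by rewrite /= rs r0w r01 Prest.
exists v0, v1, (head v1 rest); split => // w r1w wv0 wv2.
have wv1 : w != v1 by apply/eqP => wv; move: r1w; rewrite wv ri.
have wn : w \notin v0 :: v1 :: rest.
  rewrite !inE negb_or (negbTE wv1) /=; apply/andP; split; first by apply/eqP.
  apply/negP; move: Us Prest wv2; case: rest {Ms F1} => [//|x rest'] Us Prest wv2.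
  rewrite inE => /orP [/eqP wx|wr]; first by apply: wv2; rewrite wx.
  case/splitPr: wr Us Prest => r1 r2 Us Prest.
  apply: (@chord _ r v1 (x :: r1) w r2) => //=.
  by move: Us => /= /andP [_ ->].
  by rewrite rs.
move=> z rwz; apply/eqP; apply/negPn/negP => zv1.
case: (boolP (z \in v0 :: v1 :: rest)) => [|zn].
- rewrite !inE (negbTE zv1) /= => /orP [/eqP zv0|zr].
  + by move/eqP: wv1; apply; apply: F1; rewrite rs -zv0.
  + case/splitPr: zr Us Prest wn => r1 r2 Us Prest wn.
    apply: (@chord _ r w (v1 :: r1) z r2) => //=.
    * by move: wn Us; rewrite /= !inE negb_or => /andP [_ ->] /andP [_ ->].
    * by rewrite rs r1w Prest.
    * by rewrite rs.
- suff : (size rest).+3 <= (size rest).+2 by rewrite ltnn.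
  apply: (Ms (z :: w :: v1 :: rest)).
  + split.
    * have zw : z != w by apply/eqP => zw; move: rwz; rewrite zw ri.
      move: zn wn Us; rewrite /= !inE !negb_or zw.
      by case/and3P => _ -> -> /and3P [_ -> ->] /andP [_ ->].
    * by rewrite /= (rs z w) rwz (rs w v1) r1w Prest.
Qed.
End LP.

Lemma leaf_ex (V : finType) (X : {set V}) (t : rel V) : X != set0 ->
  (forall a b, t a b -> a \in X) -> symmetric t -> irreflexive t -> acyc t ->
  exists2 x, x \in X & forall y z, t x y -> t x z -> y = z.
Proof.
move=> Xn tX ts ti ta.
case: (boolP [exists a, exists b, t a b]) => [/existsP [a /existsP [b tab]]|].
- have [v0 [v1 [v2 [t01 F1 _]]]] := longest ts ti ta tab.
  exists v0; first exact: tX t01.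
  by move=> y z /F1 -> /F1 ->.
- move=> /existsPn H; case/set0Pn: Xn => x xX; exists x => // y z txy.
  by move: (H x) => /existsPn /(_ y); rewrite txy.
Qed.


Section Game.
Variable V : finType.
Variable e : rel V.
Variable D : {set V}.
Hypothesis esym : symmetric e.
Hypothesis eirr : irreflexive e.

Definition win (S : {set V}) := [exists v in ~: D, cnbhd e v \subset S].

Lemma swf0 S C st : staller_wins_from e D 0 S C st = win S.
Proof. by rewrite /= /win; case: ifP. Qed.

Lemma swfS n S C : staller_wins_from e D n.+1 S C true =
  win S || ((~: C != set0) && [exists u in ~: C, staller_wins_from e D n (u |: S) (u |: C) false]).
Proof. by rewrite /= /win; case: ifP => //= _; case: ifP. Qed.

Lemma swfSd n S C : staller_wins_from e D n.+1 S C false =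
  win S || ((~: C != set0) && [forall u in ~: C, staller_wins_from e D n S (u |: C) true]).
Proof. by rewrite /= /win; case: ifP => //= _; case: ifP. Qed.

Lemma in_cnbhd u v : (u \in cnbhd e v) = (u == v) || e v u.
Proof. by rewrite inE. Qed.

(* Dominator: pairing strategy *)
Variable M : {set V}.
Variable m : V -> V.
Hypothesis Mp : forall v, v \in M -> [/\ m v \in M, m (m v) = v & e v (m v)].
Hypothesis DM : ~: D \subset M.

Lemma nowin (S : {set V}) : (forall v, v \in M -> v \in S -> m v \notin S) -> ~~ win S.
Proof.
move=> H; apply/existsP => [[u /andP [uD /subsetP NS]]].
have uM : u \in M by apply: (subsetP DM).
have uS : u \in S by apply: NS; rewrite in_cnbhd eqxx.
have [_ _ eum] := Mp uM.
by move: (H u uM uS); rewrite NS // in_cnbhd eum orbT.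
Qed.

Definition DInv (S C : {set V}) :=
  forall v, v \in M -> v \in S -> (m v \in C) && (m v \notin S).

Lemma mneq v : v \in M -> m v != v.
Proof. by move=> /Mp [_ _ h]; apply/eqP => E; move: h; rewrite E eirr. Qed.

Lemma nowin1 (S C : {set V}) x : DInv S C -> x \notin C -> ~~ win (x |: S).
Proof.
move=> I xC; apply: nowin => v vM; rewrite !inE => /orP [/eqP vx|vS].
- subst v; rewrite negb_or mneq //=; apply/negP => mS.
  have [mM mmx _] := Mp vM.
  by move: (I _ mM mS); rewrite mmx (negbTE xC).
- rewrite negb_or; have /andP [mC mS] := I v vM vS; rewrite mS andbT.
  by apply/eqP => E; move: xC; rewrite -E mC.
Qed.

Lemma dom_main k (S C : {set V}) : DInv S C -> ~~ staller_wins_from e D k S C true.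
Proof.
elim/ltn_ind: k S C => k IH S C I.
have nw : ~~ win S.
  apply: nowin => v vM vS; by case/andP: (I v vM vS).
case: k IH => [|k] IH; first by rewrite swf0.
rewrite swfS negb_or nw /= negb_and; apply/orP; right.
rewrite negb_exists; apply/forallP => x; apply/negP => /andP [xC].
rewrite inE in xC.
case: k IH => [|k] IH; first by rewrite swf0 (negbTE (nowin1 I xC)).
rewrite swfSd (negbTE (nowin1 I xC)) /=.
case/andP => nC /forallP H.
have [y yC yP] : exists2 y, y \in ~: (x |: C) & (x \in M -> m x \notin x |: C -> y = m x).
  case: (boolP ((x \in M) && (m x \notin x |: C))) => [/andP [_ h]|h].
    by exists (m x); rewrite ?in_setC.
  case: (set_0Vmem (~: (x |: C))) => [E|[u uC]]; first by rewrite E eqxx in nC.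
  by exists u => // xM hm; rewrite xM hm in h.
have := H y; rewrite yC /=; apply/negP; apply: IH; first by [].
move=> v vM; rewrite in_setU1 => /orP [/eqP vx|vS].
- subst v.
  have mxS : m x \notin S.
    apply/negP => mS; have [mM mmx _] := Mp vM.
    by move: (I _ mM mS); rewrite mmx (negbTE xC).
  rewrite [m x \in x |: S]in_setU1 negb_or mxS andbT mneq //=.
  case: (boolP (m x \in x |: C)) => [h|h]; first by rewrite in_setU1 h orbT.
  by rewrite (yP vM h) in_setU1 eqxx.
- have /andP [mC mS] := I v vM vS.
  rewrite !in_setU1 mC !orbT /= negb_or mS andbT.
  by apply/eqP => E; move: xC; rewrite -E mC.
Qed.

Lemma win_swf k S C st : win S -> staller_wins_from e D k S C st.
Proof. by rewrite /win => H; case: k => [|k] /=; rewrite H. Qed.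

Lemma cardC1 (a : V) (A : {set V}) : a \notin A -> #|~: A| = (#|~: (a |: A)|).+1.
Proof.
move=> aA; rewrite (cardsD1 a (~: A)) in_setC aA /= add1n; congr (_.+1).
by apply: eq_card => u; rewrite !inE negb_or andbC.
Qed.

Record ginv (S C X : {set V}) (t : rel V) (s : V -> V -> V) : Prop := GI {
  g_D : X \subset ~: D;
  g_ne : X != set0;
  g_in : forall a b, t a b -> (a \in X) && (b \in X);
  g_sym : symmetric t;
  g_irr : irreflexive t;
  g_ac : acyc t;
  g_s : forall a b, t a b -> s a b = s b a /\ e a (s a b);
  g_nb : forall x w, x \in X -> e x w -> w \in S \/ exists2 y, t x y & w = s x y;
  g_dom : forall x w, x \in X -> w \in cnbhd e x -> w \in C -> w \in S;
  g_ind : forall x z, x \in X -> z \in X -> ~~ e x z }.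

Lemma stall_main k (S C X : {set V}) t s : k = #|~: C| -> S \subset C -> ginv S C X t s ->
  staller_wins_from e D k S C true.
Proof.
elim/ltn_ind: k S C X t s => k IH S C X t s Hk SC G.
have [x xX xleaf] := leaf_ex (g_ne G) (fun a b h => proj1 (andP (g_in G h)))
  (g_sym G) (g_irr G) (g_ac G).
have xD : x \in ~: D by apply: (subsetP (g_D G)).
have winx : forall S' : {set V}, (forall w, w \in cnbhd e x -> w \in S') -> win S'.
  move=> S' H; apply/existsP; exists x; rewrite xD /=; apply/subsetP => w; exact: H.
have xinN : x \in cnbhd e x by rewrite in_cnbhd eqxx.
have xC : x \in C -> x \in S by apply: (g_dom G xX xinN).
case: (boolP [exists y, t x y]) => [/existsP [y txy]|/existsPn noy].
- set w0 := s x y.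
  have [sw0 ew0] := g_s G txy.
  have w0N : w0 \in cnbhd e x by rewrite in_cnbhd ew0 orbT.
  have w0C : w0 \in C -> w0 \in S by apply: (g_dom G xX w0N).
  have Nx : forall w, w \in cnbhd e x -> [\/ w = x, w \in S | w = w0].
    move=> w; rewrite in_cnbhd => /orP [/eqP ->|exw]; first by constructor 1.
    case: (g_nb G xX exw) => [wS|[y' txy' ->]]; first by constructor 2.
    by constructor 3; rewrite /w0 (xleaf _ _ txy' txy).
  have xw0 : x != w0 by apply/eqP => E; move: ew0; rewrite -/w0 -E eirr.
  case: (boolP (x \in S)) => xS; case: (boolP (w0 \in S)) => w0S.
  + apply: win_swf; apply: winx => w /Nx [->|//|->] //.
  + have w0nC : w0 \notin C by apply/negP => /w0C; rewrite (negbTE w0S).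
    have := cardC1 w0nC; rewrite -Hk; case: k {IH Hk} => // k _.
    rewrite swfS; apply/orP; right; apply/andP; split.
      by apply/set0Pn; exists w0; rewrite in_setC.
    apply/existsP; exists w0; rewrite in_setC w0nC /=; apply: win_swf; apply: winx.
    by move=> w /Nx [->|wS|->]; rewrite in_setU1 ?eqxx ?wS ?xS ?orbT.
  + have xnC : x \notin C by apply/negP => /xC; rewrite (negbTE xS).
    have := cardC1 xnC; rewrite -Hk; case: k {IH Hk} => // k _.
    rewrite swfS; apply/orP; right; apply/andP; split.
      by apply/set0Pn; exists x; rewrite in_setC.
    apply/existsP; exists x; rewrite in_setC xnC /=; apply: win_swf; apply: winx.
    by move=> w /Nx [->|wS|->]; rewrite in_setU1 ?eqxx ?wS ?w0S ?orbT.
  + have xnC : x \notin C by apply/negP => /xC; rewrite (negbTE xS).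
    have w0nC : w0 \notin C by apply/negP => /w0C; rewrite (negbTE w0S).
    have xnC1 : x \notin w0 |: C by rewrite in_setU1 negb_or xnC andbT.
    have Ek : k = (#|~: (x |: (w0 |: C))|).+2 by rewrite Hk (cardC1 w0nC) (cardC1 xnC1).
    rewrite Ek swfS; apply/orP; right; apply/andP; split.
      by apply/set0Pn; exists x; rewrite in_setC.
    apply/existsP; exists w0; apply/andP; split; first by rewrite in_setC.
    rewrite swfSd; case: (boolP (win (w0 |: S))) => //= _.
    apply/andP; split; first by apply/set0Pn; exists x; rewrite in_setC.
    apply/forallP => u; apply/implyP; rewrite in_setC => uC.
    case: (eqVneq u x) => [->|ux].
    * apply: (IH _ _ (w0 |: S) _ (X :\ x) [rel a b | t a b && (a != x) && (b != x)] s).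
      -- by rewrite Ek.
      -- by [].
      -- by apply/subsetP => w; rewrite !in_setU1 => /orP [->|/(subsetP SC) ->]; rewrite ?orbT.
      -- have tsub : subrel [rel a b | t a b && (a != x) && (b != x)] t.
           by move=> a b /= /andP [/andP [-> _] _].
         constructor.
         ++ by apply: subset_trans (g_D G); apply: subsetDl.
         ++ apply/set0Pn; exists y; rewrite !inE; have /andP [_ ->] := g_in G txy.
            by rewrite andbT; apply/eqP => E; move: txy; rewrite E (g_irr G).
         ++ move=> a b /= /andP [/andP [tab ax] bx]; have /andP [aX bX] := g_in G tab.
            by rewrite !inE ax aX bx bX.
         ++ by move=> a b /=; rewrite (g_sym G); case: (t b a); case: (a != x); case: (b != x).
         ++ by move=> a /=; rewrite (g_irr G).
         ++ move=> [c [uc sc cc]]; apply: (g_ac G); exists c; split => //.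
            exact: sub_cycle tsub _ cc.
         ++ by move=> a b /tsub; apply: (g_s G).
         ++ move=> z w; rewrite inE => /andP [zx zX] ezw.
            case: (g_nb G zX ezw) => [wS|[y' tzy' ->]]; first by left; rewrite in_setU1 wS orbT.
            case: (eqVneq y' x) => [yx|y'x].
            ** left; rewrite in_setU1; apply/orP; left.
               have txz : t x z by rewrite (g_sym G) -yx.
               by rewrite yx (xleaf _ _ txz txy) /w0 sw0.
            ** right; exists y' => //=; rewrite tzy' y'x andbT /=.
               by move: zx; rewrite !inE.
         ++ move=> z w; rewrite inE => /andP [zx zX] wN.
            rewrite !in_setU1 => /orP [/eqP wx|/orP [/eqP ->|wC]].
            ** exfalso; move: wN; rewrite wx in_cnbhd.
               have zx' : (x == z) = false by apply/negbTE; move: zx; rewrite !inE eq_sym.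
               by rewrite zx' /= (negbTE (g_ind G zX xX)).
            ** by rewrite eqxx.
            ** by rewrite (g_dom G zX wN wC) orbT.
         ++ by move=> a b; rewrite !inE => /andP [_ aX] /andP [_ bX]; apply: (g_ind G).
    * have xnC2 : x \notin u |: (w0 |: C) by rewrite in_setU1 negb_or eq_sym ux.
      have : 0 < #|~: (x |: (w0 |: C))|.
        apply/card_gt0P; exists u; rewrite in_setC in_setU1 negb_or ux /=; exact: uC.
      case: (#|~: (x |: (w0 |: C))|) => // k' _.
      rewrite swfS; apply/orP; right; apply/andP; split.
        by apply/set0Pn; exists x; rewrite in_setC.
      apply/existsP; exists x; rewrite in_setC xnC2 /=; apply: win_swf; apply: winx.
      by move=> w /Nx [->|wS|->]; rewrite !in_setU1 ?eqxx ?wS ?orbT.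
- have Nx : forall w, w \in cnbhd e x -> w = x \/ w \in S.
    move=> w; rewrite in_cnbhd => /orP [/eqP ->|exw]; first by left.
    case: (g_nb G xX exw) => [wS|[y' txy' _]]; first by right.
    by move: (noy y'); rewrite txy'.
  case: (boolP (x \in S)) => xS.
  + by apply: win_swf; apply: winx => w /Nx [->|].
  + have xnC : x \notin C by apply/negP => /xC; rewrite (negbTE xS).
    have := cardC1 xnC; rewrite -Hk; case: k {IH Hk} => // k _.
    rewrite swfS; apply/orP; right; apply/andP; split.
      by apply/set0Pn; exists x; rewrite in_setC.
    apply/existsP; exists x; rewrite in_setC xnC /=; apply: win_swf; apply: winx.
    by move=> w /Nx [->|wS]; rewrite in_setU1 ?eqxx ?wS ?orbT.
Qed.

End Game.


Section Hyp.
Variable V : finType.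
Variable e : rel V.
Hypothesis esym : symmetric e.
Hypothesis eirr : irreflexive e.

Lemma hyper_ginv (D X : {set V}) : hyperedge e X -> X :&: D = set0 ->
  exists t s, ginv e D set0 set0 X t s.
Proof.
move=> [VF [f [[fsym fsub] [t [[tin [tsym tirr] Xne _ tac] XVF fedge f2 funiq]] deg]]] XD.
pose s a b := odflt a [pick w | (w \in VF :\: X) && f a w && f b w].
have sP : forall a b, t a b -> [/\ s a b \in VF :\: X, f a (s a b) & f b (s a b)].
  move=> a b tab; rewrite /s; case: pickP => [w /andP [/andP [h1 h2] h3]|P0] //=.
  have [w [[h1 h2 h3] _]] := funiq _ _ tab.
  by move: (P0 w); rewrite h1 h2 h3.
have sU : forall a b w, t a b -> w \in VF :\: X -> f a w -> f b w -> w = s a b.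
  move=> a b w tab h1 h2 h3; have [w0 [_ U]] := funiq _ _ tab.
  have [k1 k2 k3] := sP _ _ tab.
  by rewrite -(U w) ?(U (s a b)).
have NeNf : forall x w, x \in X -> e x w -> f x w.
  move=> x w xX exw.
  have sub : [set u | f x u] \subset [set u | e x u].
    by apply/subsetP => u; rewrite !inE => /fsub /and3P [].
  have : [set u | f x u] == [set u | e x u].
    by rewrite eqEcard sub /=; move: (deg x xX); rewrite /degree => ->.
  by move/eqP/setP/(_ w); rewrite !inE exw.
exists t, s; constructor.
- apply/subsetP => x xX; rewrite in_setC; apply/negP => xD.
  by move/setP: XD => /(_ x); rewrite !inE xX xD.
- exact: Xne.
- exact: tin.
- exact: tsym.
- exact: tirr.
- exact: tac.
- move=> a b tab; split.
  + have tba : t b a by rewrite tsym.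
    have [k1 k2 k3] := sP _ _ tba.
    by symmetry; apply: sU.
  + have [_ h _] := sP _ _ tab; by case/and3P: (fsub _ _ h) => h1 _ _.
- move=> x w xX exw; right.
  have fxw := NeNf _ _ xX exw.
  have wVX : w \in VF :\: X.
    by move: (fedge _ _ fxw); rewrite xX /= => /orP [//|/andP [_]]; rewrite inE xX.
  have [x1 [x2 [x12 t12 fw]]] := f2 _ wVX.
  have : f w x by rewrite fsym.
  rewrite fw => /orP [/eqP ex|/eqP ex]; subst x.
  + exists x2 => //; apply: sU => //; by rewrite fsym fw eqxx orbT.
  + exists x1; first by rewrite tsym.
    by apply: sU => //; [rewrite tsym | rewrite fsym fw eqxx].
- by move=> x w _ _; rewrite inE.
- move=> x z xX zX; apply/negP => exz; have := fedge _ _ (NeNf _ _ xX exz).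
  by rewrite !inE xX zX.
Qed.
End Hyp.


Lemma conn_step (V : finType) (t : rel V) a b : connect t a b -> a != b -> exists c, t a c.
Proof.
move=> /connectP [q pq ->]; case: q pq => [|c q] /=; first by rewrite eqxx.
by move=> /andP [tac _] _; exists c.
Qed.

Lemma pendant (V : finType) (r : rel V) c x : uniq c -> 2 < size c -> cycle r c -> x \in c ->
  exists y z, [/\ y != z, r x y & r z x].
Proof.
move=> Uc Sc Cc /rot_to [i c' E].
have : uniq (x :: c') by rewrite -E rot_uniq.
have : cycle r (x :: c') by rewrite -E rot_cycle.
have : 2 < size (x :: c') by rewrite -E size_rot.
case: c' {E} => [|y [|w c3]] //= _.
move=> /and3P [rxy _]; rewrite rcons_path => /andP [_ rl] /and4P [_ yn _ _].
exists y, (last w c3); split => //.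
apply/eqP => E; move: yn; rewrite E; apply/negP/negPn.
by rewrite mem_last.
Qed.

Section Forest.
Variable V : finType.
Variable e : rel V.
Hypothesis esym : symmetric e.
Hypothesis eirr : irreflexive e.
Hypothesis eac : acyc e.

Definition rW (W : {set V}) := [rel a b | e a b && (a \in W) && (b \in W)].

Lemma rW_sym W : symmetric (rW W).
Proof. by move=> a b /=; rewrite esym; case: (e b a); case: (a \in W); case: (b \in W). Qed.
Lemma rW_irr W : irreflexive (rW W).
Proof. by move=> a /=; rewrite eirr. Qed.
Lemma rW_ac W : acyc (rW W).
Proof.
move=> [c [uc sc cc]]; apply: eac; exists c; split => //.
by apply: sub_cycle cc => a b /= /andP [/andP [-> _] _].
Qed.

Definition matching (W U M : {set V}) (m : V -> V) :=
  [/\ M \subset W, U \subset M &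
      forall v, v \in M -> [/\ m v \in M, m (m v) = v & e v (m v)]].

Record sstruct (W U X : {set V}) (t : rel V) (s : V -> V -> V) : Prop := SS {
 ss_U : X \subset U;
 ss_tree : tree_on X t;
 ss_s : forall a b, t a b ->
   [/\ s a b = s b a, s a b \in W, s a b \notin X, e a (s a b) & e b (s a b)];
 ss_nb : forall x w, x \in X -> w \in W -> e x w -> exists2 y, t x y & w = s x y;
 ss_two : forall a b z, t a b -> z \in X -> e (s a b) z -> z = a \/ z = b }.

Lemma ss_mono (W' U' W U X : {set V}) t s : sstruct W' U' X t s -> W' \subset W -> U' \subset U ->
  (forall x w, x \in X -> w \in W -> e x w -> w \in W') -> sstruct W U X t s.
Proof.
move=> [h1 h2 h3 h4 h5] WW UU H; constructor => //.
- exact: subset_trans UU.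
- by move=> a b /h3 [k1 k2 k3 k4 k5]; split => //; apply: (subsetP WW).
- by move=> x w xX wW exw; apply: h4 => //; apply: H wW exw.
Qed.

Definition swap2 (l p : V) (m : V -> V) x := if x == l then p else if x == p then l else m x.

Lemma add_pair (W M : {set V}) m l p : M \subset W -> l \notin M -> p \notin M -> e l p ->
  l \in W -> p \in W ->
  (forall v, v \in M -> [/\ m v \in M, m (m v) = v & e v (m v)]) ->
  [/\ l |: (p |: M) \subset W &
      forall v, v \in l |: (p |: M) ->
        [/\ swap2 l p m v \in l |: (p |: M), swap2 l p m (swap2 l p m v) = v & e v (swap2 l p m v)]].
Proof.
move=> MW lM pM elp lW pW Mp.
have lp : l != p by apply/eqP => E; move: elp; rewrite E eirr.
split.
- by apply/subsetP => v; rewrite !in_setU1 => /or3P [/eqP ->|/eqP ->|/(subsetP MW)].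
- have sl : swap2 l p m l = p by rewrite /swap2 eqxx.
  have sp : swap2 l p m p = l by rewrite /swap2 eq_sym (negbTE lp) eqxx.
  move=> v; rewrite !in_setU1 => /or3P [/eqP ->|/eqP ->|vM].
  + by rewrite sl sp eqxx orbT.
  + by rewrite sp sl eqxx esym.
  + have [k1 k2 k3] := Mp _ vM.
    have vl : (v == l) = false by apply/negbTE/eqP => E; move: lM; rewrite -E vM.
    have vp : (v == p) = false by apply/negbTE/eqP => E; move: pM; rewrite -E vM.
    have ml : (m v == l) = false by apply/negbTE/eqP => E; move: lM; rewrite -E k1.
    have mp : (m v == p) = false by apply/negbTE/eqP => E; move: pM; rewrite -E k1.
    by rewrite /swap2 vl vp ml mp k2 k1 !orbT.
Qed.

Definition fres (W U : {set V}) :=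
  (exists M m, matching W U M m) \/ (exists X t s, sstruct W U X t s).

Lemma caseB (W U : {set V}) l p : U \subset W -> rW W l p -> (forall w, rW W l w -> w = p) ->
  l \notin U -> fres (W :\ l) (U :\ p) -> fres W U.
Proof.
move=> UW /= /andP [/andP [elp lW] pW] F1 lU [[M [m [MW UM Mp]]]|[X [t [s S]]]].
- left; case: (boolP (p \in M)) => pM.
  + exists M, m; split => //.
    * by apply: subset_trans MW (subsetDl _ _).
    * apply/subsetP => u uU; case: (eqVneq u p) => [->//|up].
      by apply: (subsetP UM); rewrite !inE up.
  + have lM : l \notin M by apply/negP => /(subsetP MW); rewrite !inE eqxx.
    have MW2 : M \subset W by apply: subset_trans MW (subsetDl _ _).
    have [k1 k2] := add_pair MW2 lM pM elp lW pW Mp.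
    exists (l |: (p |: M)), (swap2 l p m); split => //.
    apply/subsetP => u uU; rewrite !in_setU1; case: (eqVneq u p) => [_|up]; first by rewrite orbT.
    by rewrite (subsetP UM) ?orbT // !inE up.
- right; exists X, t, s; have XU := ss_U S; apply: ss_mono S _ _ _.
  + exact: subsetDl.
  + exact: subsetDl.
  + move=> x w xX wW exw; rewrite !inE wW andbT; apply/eqP => wl.
    have xU := subsetP XU _ xX.
    have xW : x \in W by apply: (subsetP UW); move: xU; rewrite !inE => /andP [].
    have xp : x = p by apply: F1; rewrite -wl esym exw wW xW.
    by move: xU; rewrite xp !inE eqxx.
Qed.


Lemma caseA (W U : {set V}) l p v2 : U \subset W -> rW W l p ->
  (forall w, rW W l w -> w = p) ->
  (forall w, rW W p w -> w <> l -> w <> v2 -> forall z, rW W w z -> z = p) ->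
  l \in U -> fres (W :\: [set l; p]) (U :\: [set l; p]) -> fres W U.
Proof.
move=> UW /= /andP [/andP [elp lW] pW] F1 F2 lU [[M [m [MW UM Mp]]]|[X [t [s S]]]].
- left.
  have lM : l \notin M by apply/negP => /(subsetP MW); rewrite !inE eqxx.
  have pM : p \notin M by apply/negP => /(subsetP MW); rewrite !inE eqxx orbT.
  have MW2 : M \subset W by apply: subset_trans MW (subsetDl _ _).
  have [k1 k2] := add_pair MW2 lM pM elp lW pW Mp.
  exists (l |: (p |: M)), (swap2 l p m); split => //.
  apply/subsetP => u uU; rewrite !in_setU1.
  case: (eqVneq u l) => //= ul; case: (eqVneq u p) => //= up.
  by rewrite (subsetP UM) // !inE negb_or ul up.
- right.
  have lp : l != p by apply/eqP => E; move: elp; rewrite E eirr.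
  have XW' : forall x, x \in X -> [/\ x \in U, x \in W, x != l & x != p].
    move=> x /(subsetP (ss_U S)); rewrite !inE negb_or => /andP [/andP [xl xp] xU].
    by rewrite xU xl xp (subsetP UW).
  have [tin [tsym tirr] Xne tconn tac] := ss_tree S.
  case: (boolP [exists x0 in X, e x0 p]) => [/existsP [x0 /andP [x0X ex0p]]|noN].
  2: { exists X, t, s; apply: ss_mono S _ _ _.
       - exact: subsetDl.
       - exact: subsetDl.
       - move=> x w xX wW exw; have [xU xW xl xp] := XW' x xX.
         rewrite !inE wW andbT negb_or; apply/andP; split; apply/eqP => E.
         + by move: xp; rewrite (F1 x) ?eqxx //= -E esym exw wW xW.
         + by move/existsP: noN; apply; exists x; rewrite xX -E exw. }
  have isol : forall a, a \in X -> e a p -> a != v2 -> forall b, b \in X -> b = a.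
    move=> a aX eap av2 b bX; have [aU aW al ap] := XW' a aX.
    have Fa := F2 a; rewrite /rW /= esym eap pW aW /= in Fa.
    have Fa' := Fa isT (elimN eqP al) (elimN eqP av2).
    apply/eqP; apply/negPn/negP => ba.
    have [c tac'] : exists c, t a c by apply: conn_step (tconn a b aX bX) _; rewrite eq_sym.
    have [_ sW _ eas _] := ss_s S tac'.
    have sp : s a c = p.
      by apply: Fa'; rewrite /rW /= eas andbT; move: (sW); rewrite !inE => /andP [_ ->].
    by move: sW; rewrite sp !inE eqxx orbT.
  have uniqN : forall a, a \in X -> e a p -> a = x0.
    move=> a aX eap; case: (eqVneq a v2) => [av2|av2]; last by symmetry; apply: (isol a).
    case: (eqVneq x0 v2) => [x0v2|x0v2]; first by rewrite av2 x0v2.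
    exact: (isol x0 x0X ex0p x0v2 a aX).
  have [x0U x0W x0l x0p] := XW' x0 x0X.
  pose nw a b := ((a == l) && (b == x0)) || ((a == x0) && (b == l)).
  have nwC : forall a b, nw a b = nw b a.
    by move=> a b; rewrite /nw orbC [(b == l) && _]andbC [(b == x0) && _]andbC.
  have tnw : forall a b, t a b -> nw a b = false.
    move=> a b tab; have /andP [aX bX] := tin _ _ tab.
    have [_ _ al _] := XW' a aX; have [_ _ bl _] := XW' b bX.
    by rewrite /nw (negbTE al) (negbTE bl) !andbF.
  pose t2 a b := t a b || nw a b.
  pose s2 a b := if nw a b then p else s a b.
  exists (l |: X), t2, s2.
  have lX : l \notin X by apply/negP => /XW' [_ _]; rewrite eqxx.
  have tlF : forall y, t l y = false.
    by move=> y; apply/negbTE/negP => /tin /andP [lX']; rewrite lX' in lX.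
  have nwl : forall y, nw l y = (y == x0).
    by move=> y; rewrite /nw eqxx /= (eq_sym l x0) (negbTE x0l) /= orbF.
  have t2l : forall y, t2 l y -> y = x0.
    by move=> y; rewrite /t2 tlF nwl => /eqP.
  have t2sym : symmetric t2 by move=> a b; rewrite /t2 tsym nwC.
  have t2x0 : t2 l x0 by rewrite /t2 nwl eqxx orbT.
  have s2l : s2 l x0 = p by rewrite /s2 nwl eqxx.
  have s2x0 : s2 x0 l = p by rewrite /s2 nwC nwl eqxx.
  have t2x0' : t2 x0 l by rewrite t2sym.
  have tsub : subrel t t2 by move=> a b tab; rewrite /t2 tab.
  have F1' : forall w, w \in W -> e l w -> w = p.
    by move=> w wW elw; apply: F1; rewrite /rW /= elw lW wW.
  constructor.
  - apply/subsetP => x; rewrite in_setU1 => /orP [/eqP ->//|/XW' [] //].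
  - split.
    + move=> a b; rewrite /t2 => /orP [/tin /andP [aX bX]|].
        by rewrite !in_setU1 aX bX !orbT.
      rewrite /nw => /orP [/andP [/eqP -> /eqP ->]|/andP [/eqP -> /eqP ->]];
        by rewrite !in_setU1 eqxx x0X !orbT.
    + split => // a; rewrite /t2 tirr /nw /=.
      case: (eqVneq a l) => [->|al]; first by rewrite (eq_sym l x0) (negbTE x0l).
      by rewrite andbF.
    + by apply/set0Pn; exists l; rewrite in_setU1 eqxx.
    + have cx0 : forall c, c \in l |: X -> connect t2 c x0.
        move=> c; rewrite in_setU1 => /orP [/eqP ->|cX]; first exact: connect1.
        apply: (connect_sub _ (tconn c x0 cX x0X)) => a b tab.
        by apply: connect1; apply: tsub.
      move=> a b aX bX; apply: connect_trans (cx0 a aX) _.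
      by rewrite (sym_connect_sym t2sym); apply: cx0.
    + move=> [c [uc sc cc]]; case: (boolP (l \in c)) => lc.
      * have [y [z [yz tly tzl]]] := pendant uc sc cc lc.
        move: yz; rewrite (t2l _ tly) (t2l z) ?eqxx //; by rewrite t2sym.
      * apply: tac; exists c; split => //.
        apply: (sub_in_cycle (P := [pred x | x != l])) _ _ cc.
        -- move=> a b; rewrite !inE => al bl; rewrite /t2 /nw (negbTE al) (negbTE bl) /=.
           by rewrite !andbF orbF.
        -- by apply/allP => x xc; rewrite inE; apply/eqP => E; move: lc; rewrite -E xc.
  - move=> a b; rewrite {1}/t2 => /orP [tab|nab].
    + have [k1 k2 k3 k4 k5] := ss_s S tab.
      have tba : t b a by rewrite tsym.
      rewrite /s2 (tnw _ _ tab) (tnw _ _ tba); split => //.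
      * by move: k2; rewrite !inE => /andP [].
      * rewrite in_setU1 negb_or k3 andbT; apply/eqP => E; move: k2.
        by rewrite E !inE eqxx.
    + rewrite /s2 nab nwC nab; split => //.
      * by rewrite in_setU1 negb_or eq_sym lp /=; apply/negP => /XW' [_ _ _]; rewrite eqxx.
      * by move: nab; rewrite /nw => /orP [/andP [/eqP -> _]|/andP [/eqP -> _]].
      * by move: nab; rewrite /nw => /orP [/andP [_ /eqP ->]|/andP [_ /eqP ->]].
  - move=> x w; rewrite in_setU1 => /orP [/eqP ->|xX] wW exw.
    + by exists x0 => //; rewrite s2l; apply: F1'.
    + have [xU xW xl xp] := XW' x xX.
      case: (eqVneq w l) => [wl|wl].
        by move: xp; rewrite (F1' x) ?eqxx // -wl esym.
      case: (eqVneq w p) => [wp|wp].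
        by exists l; rewrite (uniqN x xX) -?wp // s2x0.
      have wW' : w \in W :\: [set l; p] by rewrite !inE negb_or wl wp wW.
      have [y txy ->] := ss_nb S xX wW' exw.
      by exists y; [apply: tsub | rewrite /s2 (tnw _ _ txy)].
  - move=> a b z; rewrite {1}/t2 => /orP [tab|nab]; rewrite in_setU1 => /orP [/eqP zl|zX].
    + rewrite /s2 (tnw _ _ tab) zl => esl.
      have [_ k2 _ _ _] := ss_s S tab.
      have E : s a b = p by apply: F1'; [move: k2; rewrite !inE => /andP [] | rewrite esym].
      by move: k2; rewrite E !inE eqxx orbT.
    + rewrite /s2 (tnw _ _ tab).
    exact: (ss_two S tab zX).
    + move: nab; rewrite zl /nw => /orP [/andP [/eqP -> _]|/andP [_ /eqP ->]]; by [left|right].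
    + rewrite /s2 nab esym => ezp; have := uniqN z zX ezp.
      by move: nab; rewrite /nw => /orP [/andP [/eqP -> /eqP ->]|/andP [/eqP -> /eqP ->]] ->; [right|left].
Qed.


Lemma forest_main (W U : {set V}) : U \subset W -> fres W U.
Proof.
have [n] := ubnP #|W|; elim: n W U => // n IH W U ltW UW.
case: (boolP [exists a, exists b, rW W a b]) => [/existsP [a /existsP [b rab]] | noE].
- have [v0 [v1 [v2 [r01 F1 F2]]]] := longest (@rW_sym W) (@rW_irr W) (@rW_ac W) rab.
  have v0W : v0 \in W by move: r01 => /= /andP [/andP [_ ->]].
  case: (boolP (v0 \in U)) => l_in.
  + apply: (caseA UW r01 F1 F2 l_in); apply: IH.
    * apply: (@leq_trans #|W|) => //; apply: proper_card; apply/properP; split; first exact: subsetDl.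
      by exists v0; rewrite // !inE eqxx.
    * exact: setSD.
  + apply: (caseB UW r01 F1 l_in); apply: IH.
    * apply: (@leq_trans #|W|) => //; apply: proper_card; apply/properP; split; first exact: subsetDl.
      by exists v0; rewrite // !inE eqxx.
    * apply/subsetP => u; rewrite !inE => /andP [uv1 uU]; rewrite (subsetP UW) // andbT.
      by apply/eqP => E; move: l_in; rewrite -E uU.
- case: (set_0Vmem U) => [U0|[u uU]].
  + left; exists set0, id; split; [exact: sub0set | by rewrite U0 | by move=> v; rewrite inE].
  + right; exists [set u], [rel a b | false], (fun a b => a); constructor.
    * by rewrite sub1set.
    * split.
      -- by [].
      -- by split.
      -- by apply/set0Pn; exists u; rewrite inE.
      -- by move=> x y; rewrite !inE => /eqP xu /eqP yu; rewrite xu yu; exact: connect0.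
      -- by move=> [[|c0 c] [_ _]] //=; case: c.
    * by [].
    * move=> x w; rewrite inE => /eqP -> wW euw; move/existsP: noE; case; exists u.
      by apply/existsP; exists w; rewrite /= euw wW (subsetP UW).
    * by [].
Qed.

End Forest.


Section ToHyper.
Variable V : finType.
Variable e : rel V.
Hypothesis esym : symmetric e.
Hypothesis eirr : irreflexive e.

Lemma ss_hyper (U X : {set V}) t s : sstruct e setT U X t s -> hyperedge e X.
Proof.
move=> S.
have [tin [tsym tirr] Xne tconn tac] := ss_tree S.
pose VF := X :|: [set w | [exists a, exists b, t a b && (w == s a b)]].
pose f a b := (a \in X) && (b \in VF :\: X) && e a b || (b \in X) && (a \in VF :\: X) && e a b.
have sVF : forall a b, t a b -> s a b \in VF :\: X.
  move=> a b tab; have [_ _ k3 _ _] := ss_s S tab.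
  rewrite in_setD k3 /= in_setU inE; apply/orP; right.
  by apply/existsP; exists a; apply/existsP; exists b; rewrite tab eqxx.
have VFX : forall w, w \in VF :\: X -> exists a b, t a b /\ w = s a b.
  move=> w; rewrite in_setD in_setU => /andP [wX /orP [wX'|]]; first by rewrite wX' in wX.
  by rewrite inE => /existsP [a /existsP [b /andP [tab /eqP ->]]]; exists a, b.
have fX : forall a b, a \in X -> f a b = (b \in VF :\: X) && e a b.
  move=> a b aX; have aVX : (a \in VF :\: X) = false by rewrite in_setD aX.
  by rewrite /f aX aVX /= !andbF orbF.
have nbVF : forall x u, x \in X -> e x u -> u \in VF :\: X.
  move=> x u xX exu; have [y txy ->] := ss_nb S xX (in_setT u) exu.
  exact: sVF.
exists VF, f; split.
- split.
  + by move=> a b; rewrite /f esym orbC.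
  + move=> a b; rewrite /f => /orP [/andP [/andP [aX bV] eab]|/andP [/andP [bX aV] eab]].
    * rewrite eab /VF in_setU aX /=; by move: bV; rewrite in_setD => /andP [].
    * rewrite eab /VF [b \in _]in_setU bX /= andbT; by move: aV; rewrite in_setD => /andP [].
- exists t; split.
  + exact: ss_tree S.
  + exact: subsetUl.
  + move=> x y; rewrite /f => /orP [/andP [/andP [-> ->] _]|/andP [/andP [-> ->] _]];
    by rewrite ?orbT.
  + move=> y yV; have [a [b [tab E]]] := VFX y yV; subst y.
    exists a, b; split => //.
    * by apply/eqP => E; move: tab; rewrite E tirr.
    * move=> z; have yX : (s a b \in X) = false by move: yV; rewrite in_setD => /andP [/negbTE].
      have [_ _ _ ea eb] := ss_s S tab.
      have /andP [aX bX] := tin _ _ tab.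
      rewrite /f yX /= yV andbT.
      case: (boolP (z \in X)) => zX /=.
      -- apply/idP/idP => [ez|/orP [/eqP ->|/eqP ->]]; last 2 first.
         ++ by rewrite esym.
         ++ by rewrite esym.
         by case: (ss_two S tab zX ez) => ->; rewrite eqxx ?orbT.
      -- symmetry; apply/negbTE; rewrite negb_or; apply/andP; split; apply/eqP => E;
           by move: zX; rewrite E ?aX ?bX.
  + move=> x1 x2 t12; have /andP [x1X x2X] := tin _ _ t12.
    have [_ _ _ e1 e2] := ss_s S t12.
    exists (s x1 x2); split.
    * by rewrite sVF // !fX // sVF // e1 e2.
    * move=> y [yV f1 f2]; have [a [b [tab E]]] := VFX y yV; subst y.
      rewrite fX // in f1; rewrite fX // in f2.
      move: f1 f2 => /andP [_ f1] /andP [_ f2].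
      have x12 : x1 != x2 by apply/eqP => E; move: t12; rewrite E tirr.
      have [sab _ _ _ _] := ss_s S tab.
      have h1 : e (s a b) x1 by rewrite esym.
      have h2 : e (s a b) x2 by rewrite esym.
      case: (ss_two S tab x1X h1) => E1; case: (ss_two S tab x2X h2) => E2;
        subst x1 x2; rewrite ?eqxx // in x12.
- move=> x xX; rewrite /degree; apply: eq_card => u; rewrite !inE fX //.
  by case exu: (e x u); rewrite ?andbF ?andbT // (nbVF x u xX exu).
Qed.
End ToHyper.


Lemma key (V : finType) (e : rel V) (D : {set V}) : is_tree e ->
  (staller_wins e D <-> exists X, hyperedge e X /\ X :&: D = set0).
Proof.
move=> [_ [esym eirr] _ _ eac]; split.
- move=> SW; case: (forest_main esym eirr eac (subsetT (~: D))) => [[M [m [_ UM Mp]]]|[X [t [s S]]]].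
  + exfalso; have DI : DInv M m set0 set0 by move=> v _; rewrite inE.
    by move/negP: (dom_main eirr Mp UM #|V| DI); apply.
  + exists X; split; first exact: (@ss_hyper V e esym _ X t s S).
    apply/setP => x; rewrite !inE; apply/negP => /andP [xX xD].
    by have := subsetP (ss_U S) _ xX; rewrite inE xD.
- move=> [X [HX XD]]; have [t [s G]] := hyper_ginv HX XD.
  rewrite /staller_wins; apply: (stall_main eirr _ _ G).
  + by rewrite setC0 cardsT.
  + exact: sub0set.
Qed.

Theorem proposition6p5 (V : finType) (e : rel V) (D : {set V}) :
  is_tree e ->
  (dominator_critical e D <->
   (exists X, hyperedge e X) /\ minimal_transversal e D).
Proof.
move=> T; have K := fun D' => key D' T.
split.
- move=> [Dn DW Dv]; case/set0Pn: Dn => v vD.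
  have tr : Defs.transversal e D.
    move=> X HX; apply/negP => /eqP XD; move/negP: DW; apply; apply/(K D).
    by exists X.
  split.
  + by have [X [HX _]] := (K (D :\ v)).1 (Dv v vD); exists X.
  + split => // D' /properP [D'D [w wD wD']] trD'.
    have [X [HX XD]] := (K (D :\ w)).1 (Dv w wD).
    case/set0Pn: (trD' X HX) => x; rewrite inE => /andP [xX xD'].
    have : x \in X :&: (D :\ w).
      rewrite !inE xX (subsetP D'D _ xD') andbT /=.
      by apply/eqP => E; move: wD'; rewrite -E xD'.
    by rewrite XD inE.
- move=> [[X0 HX0] [trD minD]]; split.
  + by apply/set0Pn; case/set0Pn: (trD X0 HX0) => x; rewrite inE => /andP [_ xD]; exists x.
  + apply/negP => /(K D) [X [HX XD]]; by move: (trD X HX); rewrite XD eqxx.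
  + move=> v vD; apply/(K (D :\ v)).
    have pr : D :\ v \proper D by rewrite properD1.
    have := minD _ pr; rewrite /Defs.transversal => H.
    apply: NNPP => Hn; apply: H => X HX; apply/negP => /eqP XD; apply: Hn; by exists X.
Qed.
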